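(* The set operad $\mathcal{C}om\mathcal{T}rias=(\mathcal{C}om\mathcal{T}rias_n)_{n\ge1}$, with $\mathcal{C}om\mathcal{T}rias_n=\{e^n_J\mid \emptyset\neq J\subset[n]\}$, $\mathbb{S}_n$ acting through its action on subsets of $[n]$, and composition $\mu(e^k_J;e^{i_1}_{J_1},\dots,e^{i_k}_{J_k})=e^{i_1+\cdots+i_k}_{\bar J}$ with $\bar J=\bigcup_{j\in J}\{i_1+\cdots+i_{j-1}+a\mid a\in J_j\}$, is a basic-set operad.
   Context: A set operad is basic-set if for all $\nu_1\in P_{i_1},\dots,\nu_t\in P_{i_t}$ the map $P_t\to P_{i_1+\cdots+i_t}$, $\nu\mapsto\mu(\nu;\nu_1,\dots,\nu_t)$ is injective. *)

(* Defs.v *)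
From mathcomp Require Import all_boot.
Set Implicit Arguments. Unset Strict Implicit. Unset Printing Implicit Defensive.

(* ComTrias_n = { e^n_J | J nonempty subset of [n] }; we represent e^n_J by
   J : {set 'I_n} (0-based indexing: [n] = {0,...,n-1}) with J != set0. *)
Definition ComTrias_elem (n : nat) (J : {set 'I_n}) : bool := J != set0.

(* offset j = i_1 + ... + i_{j-1}  (0-based: sum of i l for l < j) *)
Definition offset (k : nat) (i : 'I_k -> nat) (j : 'I_k) : nat :=
  \sum_(l < k | (l < j)%N) i l.

Definition ct_compose (k : nat) (i : 'I_k -> nat) (J : {set 'I_k})
  (Js : forall j : 'I_k, {set 'I_(i j)}) : {set 'I_(\sum_(j < k) i j)} :=
  [set x : 'I_(\sum_(j < k) i j) |
     [exists j : 'I_k, (j \in J) &&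
        [exists a : 'I_(i j), (a \in Js j) && (val x == offset i j + val a)]]].

(* Main.v *)
Require Import Defs.
From mathcomp Require Import all_boot.
From mathcomp Require Import zify.

Lemma sum_ge (k : nat) (i : 'I_k -> nat) (j : 'I_k) (P : pred 'I_k) :
  P j -> (forall l : 'I_k, l < j -> P l) ->
  offset i j + i j <= \sum_(l < k | P l) i l.
Proof.
move=> Pj HP; rewrite (bigD1 j) //= addnC leq_add2l /offset.
rewrite [X in _ <= X](bigID (fun l : 'I_k => l < j)) /=.
apply: leq_trans (leq_addr _ _); rewrite leq_eqVlt; apply/orP; left; apply/eqP.
apply: eq_bigl => l; case lj: (l < j); rewrite ?andbF ?andbT //=.
by rewrite HP //= neq_ltn lj.

Qed.

Lemma uniq_dec (k : nat) (i : 'I_k -> nat) (j j' : 'I_k) (a : 'I_(i j)) (a' : 'I_(i j')) :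
  offset i j + a = offset i j' + a' -> j = j'.
Proof.
move=> E; apply/val_inj => /=.
case: (ltngtP j j') => // H.
- have := @sum_ge k i j (fun l => l < j') H (fun l h => ltn_trans h H).
  rewrite -/(offset i j') => Hle.
  have := ltn_ord a; have := leq_addr a' (offset i j'); lia.
- have := @sum_ge k i j' (fun l => l < j) H (fun l h => ltn_trans h H).
  rewrite -/(offset i j) => Hle.
  have := ltn_ord a'; have := leq_addr a (offset i j); lia.
Qed.

Lemma one_dir (k : nat) (i : 'I_k -> nat) (Js : forall j : 'I_k, {set 'I_(i j)}) :
  (forall j : 'I_k, ComTrias_elem (Js j)) ->
  forall J J' : {set 'I_k}, ct_compose J Js = ct_compose J' Js ->
  forall j, j \in J -> j \in J'.
Proof.
move=> HJs J J' E j jJ.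
have /set0Pn [a aJ] := HJs j.
have Hx : offset i j + a < \sum_(l < k) i l.
  have := @sum_ge k i j xpredT isT (fun _ _ => isT).
  have := ltn_ord a; lia.
have : Ordinal Hx \in ct_compose J Js.
  rewrite inE; apply/existsP; exists j; rewrite jJ /=.
  by apply/existsP; exists a; rewrite aJ /=.
rewrite E inE => /existsP [j' /andP [j'J /existsP [a' /andP [_ /eqP /= Ea]]]].
by rewrite (@uniq_dec _ _ _ _ _ _ Ea).
Qed.

Theorem mainTheorem7 :
  forall (k : nat) (i : 'I_k -> nat) (Js : forall j : 'I_k, {set 'I_(i j)}),
    (forall j : 'I_k, ComTrias_elem (Js j)) ->
    forall J J' : {set 'I_k},
      ComTrias_elem J -> ComTrias_elem J' ->
      ct_compose J Js = ct_compose J' Js -> J = J'.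
Proof.
move=> k i Js HJs J J' _ _ E; apply/setP => j; apply/idP/idP.
- exact: one_dir E j.
- exact: one_dir (esym E) j.
Qed.
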